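(* Let $R$ be an associative ring with unity, $\sigma$ an endomorphism of $R$ and $\delta$ a $\sigma$-derivation of $R$. Assume that $Re$ is $(\sigma,\delta)$-stable for all $e\in\mathcal{S}_\ell(R)$ and that $R$ satisfies the condition $(\mathcal{C}_\sigma)$. If $R$ is right p.q.-Baer, then the Ore extension $R[x;\sigma,\delta]$ is right p.q.-Baer.
   Context: A $\sigma$-derivation is an additive map $\delta$ with $\delta(ab)=\sigma(a)\delta(b)+\delta(a)b$. $R[x;\sigma,\delta]$ is the ring of polynomials $\sum a_ix^i$ ($a_i\in R$, coefficients on the left) with multiplication determined by that of $R$ and $xa=\sigma(a)x+\delta(a)$. $\mathcal{S}_\ell(R)$ is the set of idempotents $e$ with $ere=re$ for all $r\in R$. A subset $X$ is $(\sigma,\delta)$-stable if $\sigma(X)\subseteq X$ and $\delta(X)\subseteq X$. $R$ satisfies $(\mathcal{C}_\sigma)$ if $a\sigma(b)=0$ implies $ab=0$ for all $a,b\in R$. A ring $T$ is right p.q.-Baer if the right annihilator $r_T(aT)=\{t\in T\mid aTt=0\}$ of every principal right ideal $aT$ is generated (as a right ideal) by an idempotent. *)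

(* Defs.v *)
From HB Require Import structures.
From mathcomp Require Import all_boot all_order all_algebra.
Set Implicit Arguments. Unset Strict Implicit. Unset Printing Implicit Defensive.
Import GRing.Theory.
Local Open Scope ring_scope.

Definition sigma_derivation (R : nzRingType) (sigma : R -> R) (delta : {additive R -> R}) : Prop :=
  forall a b : R, delta (a * b) = sigma a * delta b + delta a * b.

(* Elements of R[x;sigma,delta] are represented by {poly R}: sum_i a_i x^i,
   coefficients on the left. Addition is that of {poly R}; multiplication is
   the Ore multiplication defined below. *)

(* left multiplication by x: x * (sum a_i x^i) = sum (sigma(a_i) x^(i+1) + delta(a_i) x^i) *)
Definition ore_xmul (R : nzRingType) (sigma delta : R -> R) (q : {poly R}) : {poly R} :=
  \poly_(i < size q) sigma q`_i * 'X + \poly_(i < size q) delta q`_i.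

Definition ore_mul (R : nzRingType) (sigma delta : R -> R) (p q : {poly R}) : {poly R} :=
  \sum_(i < size p) (p`_i)%:P * iter i (ore_xmul sigma delta) q.

Definition left_semicentral (R : nzRingType) (e : R) : Prop :=
  e * e = e /\ forall r : R, e * r * e = r * e.

Definition Re_stable (R : nzRingType) (sigma delta : R -> R) (e : R) : Prop :=
  (forall r : R, exists r' : R, sigma (r * e) = r' * e) /\
  (forall r : R, exists r' : R, delta (r * e) = r' * e).

Definition cond_C (R : nzRingType) (sigma : R -> R) : Prop :=
  forall a b : R, a * sigma b = 0 -> a * b = 0.

Definition right_pqBaer (T : Type) (mul : T -> T -> T) (zero : T) : Prop :=
  forall a : T, exists e : T, mul e e = e /\
    forall t : T, (forall s : T, mul (mul a s) t = zero) <-> exists s : T, t = mul e s.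

(* Main.v *)
Require Import Defs.
From HB Require Import structures.
From mathcomp Require Import all_boot all_order all_algebra.
From mathcomp Require Import zify.
Import GRing.Theory.
Local Open Scope ring_scope.

Lemma coefX (R : nzRingType) (s : {rmorphism R -> R}) (d : {additive R -> R})
  (q : {poly R}) j :
  (ore_xmul s d q)`_j = (if j is j'.+1 then s q`_j' else 0) + d q`_j.
Proof.
rewrite /ore_xmul coefD coefMX !coef_poly.
have E : forall (f : R -> R), f 0 = 0 -> forall k,
   (if (k < size q)%N then f q`_k else 0) = f q`_k.
  by move=> f f0 k; case: ltnP => // h; rewrite nth_default.
case: j => [|j] /=; first by rewrite E ?raddf0.
by rewrite !E ?raddf0 ?rmorph0.
Qed.

Lemma size_X (R : nzRingType) (s : {rmorphism R -> R}) (d : {additive R -> R})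
  (q : {poly R}) : (size (ore_xmul s d q) <= (size q).+1)%N.
Proof.
apply/leq_sizeP => j hj; rewrite coefX.
case: j hj => [|j] hj //.
by rewrite !nth_default ?rmorph0 ?raddf0 ?addr0 //; apply: leq_trans hj.
Qed.

Lemma XD (R : nzRingType) (s : {rmorphism R -> R}) (d : {additive R -> R})
  (p q : {poly R}) : ore_xmul s d (p + q) = ore_xmul s d p + ore_xmul s d q.
Proof.
apply/polyP => j; rewrite coefD !coefX !coefD !raddfD.
case: j => [|j]; rewrite ?add0r // coefD rmorphD; exact: addrACA.
Qed.

Lemma X0 (R : nzRingType) (s : {rmorphism R -> R}) (d : {additive R -> R}) :
  ore_xmul s d 0 = 0.
Proof. apply/polyP => j; rewrite coefX !coef0 raddf0 addr0; case: j => /= [|j] //; by rewrite coef0 rmorph0. Qed.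

Lemma XC (R : nzRingType) (s : {rmorphism R -> R}) (d : {additive R -> R})
  (hd : sigma_derivation s d) (c : R) (q : {poly R}) :
  ore_xmul s d (c%:P * q) = (s c)%:P * ore_xmul s d q + (d c)%:P * q.
Proof.
apply/polyP => j; rewrite coefX [RHS]coefD !coefCM coefX.
case: j => [|j]; rewrite ?coefCM hd ?rmorphM ?add0r ?mulrDr ?addrA //.
Qed.

Lemma ore_mulE (R : nzRingType) (s d : R -> R) (p q : {poly R}) N :
  (size p <= N)%N ->
  ore_mul s d p q = \sum_(i < N) (p`_i)%:P * iter i (ore_xmul s d) q.
Proof.
move=> hN; rewrite /ore_mul (big_ord_widen _ (fun i => (p`_i)%:P * iter i (ore_xmul s d) q) hN).
rewrite big_mkcond; apply: congr_big => // i _; case: ifP => // h.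
by rewrite nth_default ?mul0r // leqNgt h.
Qed.

Lemma Xsum (R : nzRingType) (s : {rmorphism R -> R}) (d : {additive R -> R})
  N (F : 'I_N -> {poly R}) :
  ore_xmul s d (\sum_(i < N) F i) = \sum_(i < N) ore_xmul s d (F i).
Proof. by rewrite (big_morph (ore_xmul s d) (XD _ s d) (X0 _ s d)). Qed.

Lemma ore_mul0l (R : nzRingType) (s d : R -> R) (r : {poly R}) :
  ore_mul s d 0 r = 0.
Proof. by rewrite /ore_mul size_poly0 big_ord0. Qed.

Lemma ore_mulDl (R : nzRingType) (s d : R -> R) (p q r : {poly R}) :
  ore_mul s d (p + q) r = ore_mul s d p r + ore_mul s d q r.
Proof.
have h : (size (p + q)%R <= size p + size q)%N.
  by apply: leq_trans; first exact: size_polyD; rewrite geq_max leq_addr leq_addl.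
rewrite (ore_mulE _ _ _ _ _ _ h) (ore_mulE _ _ _ _ _ _ (leq_addr (size q) (size p))) (ore_mulE _ _ _ _ _ _ (leq_addl (size p) (size q))) -big_split.
by apply: eq_bigr => i _; rewrite coefD polyCD mulrDl.
Qed.

Lemma ore_mulCl (R : nzRingType) (s d : R -> R) (c : R) (p r : {poly R}) :
  ore_mul s d (c%:P * p) r = c%:P * ore_mul s d p r.
Proof.
have h : (size (c%:P * p)%R <= size p)%N.
  by apply/leq_sizeP => j hj; rewrite coefCM nth_default ?mulr0.
rewrite (ore_mulE _ _ _ _ _ _ h) (ore_mulE _ _ _ _ _ _ (leqnn _)) mulr_sumr.
by apply: eq_bigr => i _; rewrite coefCM polyCM mulrA.
Qed.

Lemma ore_mulXl (R : nzRingType) (s : {rmorphism R -> R}) (d : {additive R -> R})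
  (hd : sigma_derivation s d) (u r : {poly R}) :
  ore_mul s d (ore_xmul s d u) r = ore_xmul s d (ore_mul s d u r).
Proof.
rewrite (ore_mulE _ _ _ _ _ _ (size_X _ s d u)) (ore_mulE _ _ _ _ _ _ (leqnn _)) Xsum.
under eq_bigr do rewrite coefX polyCD mulrDl.
under [RHS]eq_bigr do rewrite XC //.
rewrite !big_split /=; congr (_ + _).
  by rewrite big_ord_recl /= mul0r add0r.
by rewrite big_ord_recr /= nth_default // raddf0 mul0r addr0.
Qed.

Lemma ore_mulXnl (R : nzRingType) (s : {rmorphism R -> R}) (d : {additive R -> R})
  (hd : sigma_derivation s d) k (u r : {poly R}) :
  ore_mul s d (iter k (ore_xmul s d) u) r = iter k (ore_xmul s d) (ore_mul s d u r).
Proof. by elim: k => //= k IH; rewrite ore_mulXl // IH. Qed.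

Lemma ore_mulA (R : nzRingType) (s : {rmorphism R -> R}) (d : {additive R -> R})
  (hd : sigma_derivation s d) (p q r : {poly R}) :
  ore_mul s d (ore_mul s d p q) r = ore_mul s d p (ore_mul s d q r).
Proof.
have E : ore_mul s d p q = \sum_(i < size p) (p`_i)%:P * iter i (ore_xmul s d) q by [].
rewrite E (big_morph (fun x => ore_mul s d x r) (fun x y => ore_mulDl _ s d x y r) (ore_mul0l _ s d r)).
by apply: eq_bigr => i _; rewrite ore_mulCl ore_mulXnl.
Qed.

Lemma le_tr {m n p : nat} : (m <= n)%N -> (n <= p)%N -> (m <= p)%N.
Proof. exact: leq_trans. Qed.

Lemma size_Xn (R : nzRingType) (s : {rmorphism R -> R}) (d : {additive R -> R})
  k (q : {poly R}) : (size (iter k (ore_xmul s d) q) <= size q + k)%N.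
Proof.
elim: k => [|k IH] /=; first by rewrite addn0.
by apply: (le_tr (size_X _ s d _)); rewrite addnS ltnS.
Qed.

Lemma coef_Xn_top (R : nzRingType) (s : {rmorphism R -> R}) (d : {additive R -> R})
  k m (q : {poly R}) : (size q <= m.+1)%N ->
  (iter k (ore_xmul s d) q)`_(m + k) = iter k s (q`_m).
Proof.
move=> hq; elim: k => [|k IH] /=; first by rewrite addn0.
have h : (size (iter k (ore_xmul s d) q) <= (m + k).+1)%N.
  by apply: (le_tr (size_Xn _ s d k q)); rewrite -addSn leq_add2r.
by rewrite addnS coefX IH (nth_default _ h) raddf0 addr0.
Qed.

Lemma top_mul (R : nzRingType) (s : {rmorphism R -> R}) (d : {additive R -> R})
  n m (p q : {poly R}) : (size p <= n.+1)%N -> (size q <= m.+1)%N ->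
  (size (ore_mul s d p q) <= (n + m).+1)%N /\
  (ore_mul s d p q)`_(n + m) = p`_n * iter n s (q`_m).
Proof.
move=> hp hq; rewrite (ore_mulE _ _ _ _ _ _ hp); split.
  apply/leq_sizeP => j hj; rewrite coef_sum big1 // => i _.
  have h : (size (iter i (ore_xmul s d) q) <= j)%N.
    apply: (le_tr (size_Xn _ s d i q)); apply: le_tr hj.
    case: i => i /= hi; rewrite ltnS in hi; apply: le_tr (leq_add hq hi) _; by rewrite addSn addnC.
  by rewrite coefCM (nth_default _ h) mulr0.
rewrite coef_sum big_ord_recr /= big1 ?add0r.
  by rewrite coefCM addnC coef_Xn_top.
move=> i _.
have h : (size (iter i (ore_xmul s d) q) <= n + m)%N.
  apply: (le_tr (size_Xn _ s d i q)).
  case: i => i /= hi; apply: le_tr (leq_add hq (leqnn i)) _; by rewrite addSn -addnS addnC leq_add2r.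
by rewrite coefCM (nth_default _ h) mulr0.
Qed.

Lemma iterC (R : nzRingType) (s : {rmorphism R -> R}) (hC : cond_C s) k (a b : R) :
  a * iter k s b = 0 -> a * b = 0.
Proof. by elim: k b => [|k IH] b //= h; apply: IH; apply: hC. Qed.


Lemma closX (R : nzRingType) (s : {rmorphism R -> R}) (d : {additive R -> R})
  (P : R -> Prop) (P0 : P 0) (PD : forall a b, P a -> P b -> P (a + b))
  (Ps : forall b, P b -> P (s b)) (Pd : forall b, P b -> P (d b))
  (q : {poly R}) : (forall j, P q`_j) -> forall j, P (ore_xmul s d q)`_j.
Proof. by move=> hq j; rewrite coefX; apply: PD; case: j => *; auto. Qed.

Lemma closXn (R : nzRingType) (s : {rmorphism R -> R}) (d : {additive R -> R})
  (P : R -> Prop) (P0 : P 0) (PD : forall a b, P a -> P b -> P (a + b))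
  (Ps : forall b, P b -> P (s b)) (Pd : forall b, P b -> P (d b))
  k (q : {poly R}) : (forall j, P q`_j) -> forall j, P (iter k (ore_xmul s d) q)`_j.
Proof. by move=> hq; elim: k => //= k IH; apply: closX. Qed.

Lemma closMul (R : nzRingType) (s : {rmorphism R -> R}) (d : {additive R -> R})
  (P : R -> Prop) (P0 : P 0) (PD : forall a b, P a -> P b -> P (a + b))
  (PL : forall r b, P b -> P (r * b))
  (Ps : forall b, P b -> P (s b)) (Pd : forall b, P b -> P (d b))
  (p q : {poly R}) : (forall j, P q`_j) -> forall j, P (ore_mul s d p q)`_j.
Proof.
move=> hq j; rewrite /ore_mul coef_sum.
apply: (big_ind P) => // i _; rewrite coefCM; apply: PL.
exact: closXn.
Qed.

Lemma ore_mulC1 (R : nzRingType) (s d : R -> R) (c : R) (q : {poly R}) :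
  ore_mul s d c%:P q = c%:P * q.
Proof.
rewrite (ore_mulE _ _ _ _ _ _ (size_polyC_leq1 c)) big_ord1 /=.
by rewrite coefC eqxx.
Qed.

Lemma iter_rmorphM (R : nzRingType) (s : {rmorphism R -> R}) k (a b : R) :
  iter k s (a * b) = iter k s a * iter k s b.
Proof. by elim: k => //= k ->; rewrite rmorphM. Qed.

Lemma ls_of (R : nzRingType) (e : R) (Q : R -> Prop) :
  e * e = e -> (forall b, Q b <-> exists s, b = e * s) ->
  (forall r b, Q b -> Q (r * b)) -> forall r, e * r * e = r * e.
Proof.
move=> he hQ hL r.
have : Q (r * e) by apply: hL; apply/hQ; exists e.
move/hQ=> [s hs]; by rewrite -mulrA hs mulrA he.
Qed.

Lemma annih_fin (R : nzRingType) (hR : right_pqBaer (@GRing.mul R) 0)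
  (a : nat -> R) n : exists e : R, e * e = e /\
  forall b, (forall i, (i < n)%N -> forall r, a i * r * b = 0) <-> exists s, b = e * s.
Proof.
elim: n => [|n [e0 [he0 h0]]].
  exists 1; rewrite mulr1; split => // b; split => _ //; by exists b; rewrite mul1r.
have [e1 [he1 h1]] := hR (a n).
have ls1 : forall r, e1 * r * e1 = r * e1.
  by apply: (@ls_of _ e1 (fun t => forall s, a n * s * t = 0) he1 h1) => r b hb r'; by rewrite mulrA -(mulrA (a n)) hb.
have h1' : forall b, (forall r, a n * r * b = 0) <-> e1 * b = b.
  move=> b; split; first by move/h1 => [s ->]; rewrite mulrA he1.
  by move=> hb; apply/h1; exists b.
have h0' : forall b, (forall i, (i < n)%N -> forall r, a i * r * b = 0) <-> e0 * b = b.
  move=> b; split; first by move/h0 => [s ->]; rewrite mulrA he0.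
  by move=> hb; apply/h0; exists b.
exists (e0 * e1); split.
  by rewrite -mulrA (mulrA e1 e0 e1) ls1 mulrA he0.
move=> b; split.
  move=> H; exists b.
  have hb1 : e1 * b = b by apply/h1' => r; apply: H.
  have hb0 : e0 * b = b by apply/h0' => i hi; apply: H; apply: ltnW.
  by rewrite -mulrA hb1 hb0.
move=> [s ->] i; rewrite ltnS leq_eqVlt => /orP [/eqP -> | hi] r.
  have : e1 * (e0 * e1 * s) = e0 * e1 * s by rewrite !mulrA ls1.
  by move/h1'; apply.
have : e0 * (e0 * e1 * s) = e0 * e1 * s by rewrite !mulrA he0.
by move/h0'; apply.
Qed.

Lemma PL_s (R : nzRingType) (s : {rmorphism R -> R}) (d : {additive R -> R})
  (e : R) (he : e * e = e) (hs : Re_stable s d e) (b : R) :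
  b * e = b -> s b * e = s b /\ d b * e = d b.
Proof.
move=> hb; have [hs1 hs2] := hs.
have [r1 h1] := hs1 b; have [r2 h2] := hs2 b.
rewrite hb in h1 h2; by rewrite h1 h2 -!mulrA he.
Qed.

Lemma PJ_s (R : nzRingType) (s : {rmorphism R -> R}) (d : {additive R -> R})
  (hd : sigma_derivation s d)
  (e : R) (he : e * e = e) (ls : forall r, e * r * e = r * e)
  (hs : Re_stable s d e) (b : R) :
  e * b = b -> e * s b = s b /\ e * d b = d b.
Proof.
move=> hb; have [hs1 hs2] := hs.
have [r1 h1] := hs1 1; have [r2 h2] := hs2 1.
rewrite mul1r in h1 h2.
have E1 : s b = r1 * e * s b by rewrite -h1 -rmorphM hb.
have E2 : d b = r1 * e * d b + r2 * e * b by rewrite -h1 -h2 -hd hb.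
split; first by rewrite E1 !mulrA ls.
by rewrite E2 mulrDr !mulrA !ls.
Qed.

Lemma PJ_L (R : nzRingType) (e : R) (ls : forall r, e * r * e = r * e) (r b : R) :
  e * b = b -> e * (r * b) = r * b.
Proof. by move=> hb; rewrite -hb !mulrA ls -mulrA hb. Qed.

Lemma trunc (R : nzRingType) (s d : R -> R) n (f u : {poly R}) :
  (size f <= n.+1)%N -> (forall j, f`_n * (iter n (ore_xmul s d) u)`_j = 0) ->
  ore_mul s d f u = ore_mul s d (\poly_(i < n) f`_i) u.
Proof.
move=> hf h0; rewrite (ore_mulE _ _ _ _ _ _ hf) (ore_mulE _ _ _ _ _ _ (size_poly _ _)).
rewrite big_ord_recr /=.
have -> : (f`_n)%:P * iter n (ore_xmul s d) u = 0.
  by apply/polyP => j; rewrite coefCM h0 coef0.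
rewrite addr0; apply: eq_bigr => i _; by rewrite coef_poly ltn_ord.
Qed.

Lemma hard (R : nzRingType) (s : {rmorphism R -> R}) (d : {additive R -> R})
  (hd : sigma_derivation s d)
  (hstable : forall e : R, left_semicentral e -> Re_stable s d e)
  (hC : cond_C s)
  (hR : right_pqBaer (@GRing.mul R) 0) n :
  forall f : {poly R}, (size f <= n)%N -> forall t : {poly R},
  (forall h, ore_mul s d (ore_mul s d f h) t = 0) ->
  forall i j r, f`_i * r * t`_j = 0.
Proof.
elim: n => [|n IHn] f hf.
  by move=> t _ i j r; rewrite nth_default ?mul0r // (leq_trans hf).
set a := f`_n.
have [e1 [he1 h1]] := hR a.
have ls1 : forall r, e1 * r * e1 = r * e1.
  by apply: (@ls_of _ e1 (fun t => forall s, a * s * t = 0) he1 h1) => r b hb r';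
    rewrite mulrA -(mulrA a) hb.
have hae : forall w, a * w * e1 = 0 by apply/h1; exists 1; rewrite mulr1.
have hs1 := hstable e1 (conj he1 ls1).
move=> t; have : (size t <= size t)%N by [].
move: {2}(size t) => m; elim: m t => [|m IHm] t ht H.
  by move=> i j r; rewrite (nth_default _ (leq_trans ht (leq0n j))) mulr0.
set b := t`_m.
have step1 : forall r, a * r * b = 0.
  move=> r.
  have [hs1' hc1] := top_mul _ s d n 0 f r%:P hf (size_polyC_leq1 r).
  rewrite addn0 in hs1' hc1.
  have [_ hc2] := top_mul _ s d n m (ore_mul s d f r%:P) t hs1' ht.
  have := H r%:P; move/(congr1 (fun p : {poly R} => p`_(n + m))).
  rewrite hc2 hc1 coef0 coefC eqxx -mulrA -iter_rmorphM => /(iterC _ _ hC).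
  by rewrite mulrA; apply.
have hb : e1 * b = b by have [w ->] := (h1 b).1 (fun r => step1 r); rewrite mulrA he1.
have hc : forall c h, ore_mul s d (ore_mul s d f h) (c%:P * t) = 0.
  move=> c h; rewrite -(ore_mulC1 _ s d) -ore_mulA // (ore_mulA _ _ _ hd f h); exact: H.
set t2 := (1 - e1)%:P * t.
have st2 : (size t2 <= m)%N.
  apply/leq_sizeP => j hj; rewrite coefCM.
  move: hj; rewrite leq_eqVlt => /orP [/eqP <- | hj].
    by rewrite -/b mulrBl mul1r hb subrr.
  by rewrite (nth_default _ (leq_trans ht hj)) mulr0.
have I2 := IHm t2 st2 (hc (1 - e1)).
set t1 := e1%:P * t.
set f' := \poly_(i < n) f`_i.
have H1 : forall h, ore_mul s d (ore_mul s d f' h) t1 = 0.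
  move=> h.
  have Et1 : t1 = ore_mul s d e1%:P t1.
    by rewrite ore_mulC1 /t1 mulrA -polyCM he1.
  rewrite (ore_mulA _ _ _ hd f' h t1) Et1.
  rewrite -(ore_mulA _ _ _ hd h e1%:P t1) -(ore_mulA _ _ _ hd f' (ore_mul s d h e1%:P) t1).
  rewrite -(trunc _ s d n f (ore_mul s d h e1%:P) hf).
  rewrite -(ore_mulA _ _ _ hd f h e1%:P) (ore_mulA _ _ _ hd (ore_mul s d f h) e1%:P t1) -Et1.
  exact: hc.
  move=> j.
  have P : forall j, (iter n (ore_xmul s d) (ore_mul s d h e1%:P))`_j * e1 =
       (iter n (ore_xmul s d) (ore_mul s d h e1%:P))`_j.
    apply: (closXn _ s d (fun x => x * e1 = x)).
    - by rewrite mul0r.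
    - by move=> x y hx hy; rewrite mulrDl hx hy.
    - by move=> x hx; have [] := PL_s _ _ _ _ he1 hs1 _ hx.
    - by move=> x hx; have [] := PL_s _ _ _ _ he1 hs1 _ hx.
    apply: (closMul _ s d (fun x => x * e1 = x)).
    - by rewrite mul0r.
    - by move=> x y hx hy; rewrite mulrDl hx hy.
    - by move=> r x hx; rewrite -mulrA hx.
    - by move=> x hx; have [] := PL_s _ _ _ _ he1 hs1 _ hx.
    - by move=> x hx; have [] := PL_s _ _ _ _ he1 hs1 _ hx.
    by move=> k; rewrite coefC; case: (k == 0)%N; rewrite ?he1 ?mul0r.
  by rewrite -P mulrA hae.
have I1 := IHn f' (size_poly _ _) t1 H1.
move=> i j r.
have -> : t`_j = t1`_j + t2`_j by rewrite /t1 /t2 !coefCM -mulrDl addrC subrK mul1r.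
rewrite mulrDr I2 addr0 /t1 coefCM.
have [hi | hi | ->] := ltngtP i n.
- by have := I1 i j r; rewrite /f' coef_poly hi coefCM.
- by rewrite nth_default ?mul0r ?mulr0 // (leq_trans hf hi).
- by rewrite mulrA -/a hae mul0r.
Qed.

Theorem proposition3p2 (R : nzRingType) (sigma : {rmorphism R -> R})
  (delta : {additive R -> R})
  (hdelta : sigma_derivation sigma delta)
  (hstable : forall e : R, left_semicentral e -> Re_stable sigma delta e)
  (hC : cond_C sigma)
  (hR : right_pqBaer (@GRing.mul R) 0) :
  right_pqBaer (ore_mul sigma delta) (0 : {poly R}).
Proof.
move=> f.
have [e [he hch]] := annih_fin _ hR (fun i => f`_i) (size f).
have ls : forall r, e * r * e = r * e.
  apply: (@ls_of _ e _ he hch) => r b hb i hi r'.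
  by rewrite mulrA -(mulrA _ r' r) hb.
have hs := hstable e (conj he ls).
have hfe : forall i, (i < size f)%N -> forall w, f`_i * (e * w) = 0.
  move=> i hi w; have h0 := proj2 (hch e) (ex_intro _ e (esym he)) i hi 1.
  by rewrite mulrA -(mulr1 f`_i) h0 mul0r.
exists e%:P; split.
  by rewrite ore_mulC1 -polyCM he.
move=> t; split.
  move=> H; exists t; rewrite ore_mulC1; apply/polyP => j; rewrite coefCM.
  have : forall i, (i < size f)%N -> forall r, f`_i * r * t`_j = 0.
    by move=> i _ r; apply: (hard _ _ _ hdelta hstable hC hR _ _ (leqnn _) _ H).
  by move/hch => [w ->]; rewrite mulrA he.
move=> [w ->] h; rewrite ore_mulC1 ore_mulA //.
set u := ore_mul _ _ h _.
have Pu : forall j, e * u`_j = u`_j.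
  apply: (closMul _ sigma delta (fun x => e * x = x)).
  - by rewrite mulr0.
  - by move=> x y hx hy; rewrite mulrDr hx hy.
  - by move=> r x hx; apply: PJ_L.
  - by move=> x hx; have [] := PJ_s _ _ _ hdelta _ he ls hs _ hx.
  - by move=> x hx; have [] := PJ_s _ _ _ hdelta _ he ls hs _ hx.
  by move=> k; rewrite coefCM mulrA he.
rewrite /ore_mul; apply/polyP => j; rewrite coef_sum coef0 big1 // => i _.
rewrite coefCM.
have : forall k, e * (iter i (ore_xmul sigma delta) u)`_k = (iter i (ore_xmul sigma delta) u)`_k.
  apply: (closXn _ sigma delta (fun x => e * x = x)).
  - by rewrite mulr0.
  - by move=> x y hx hy; rewrite mulrDr hx hy.
  - by move=> x hx; have [] := PJ_s _ _ _ hdelta _ he ls hs _ hx.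
  - by move=> x hx; have [] := PJ_s _ _ _ hdelta _ he ls hs _ hx.
  exact: Pu.
move=> /(_ j) <-; exact: hfe (ltn_ord i) _.
Qed.
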